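(* Let $\rho\in\mathcal{D}(\mathcal{H})$ be a fixed density matrix. Then the function $\sigma\mapsto S(\rho\,\|\,\sigma)$ is $\lambda_{\max}(\rho)$-smooth and $\lambda_{\min}(\rho)$-strongly convex relative to the negative log determinant $\sigma\mapsto-\log\det(\sigma)$ on $\mathcal{D}(\mathcal{H})$.
   Context: $\mathcal{D}(\mathcal{H})$ is the set of positive semidefinite unit-trace Hermitian operators on $\mathcal{H}\cong\mathbb{C}^n$; $S(\rho\|\sigma)=\operatorname{tr}[\rho(\log\rho-\log\sigma)]$ is the quantum relative entropy. A function $g$ is $L$-smooth (resp. $\mu$-strongly convex) relative to $\varphi$ on $\mathcal{C}$ if $L\varphi-g$ (resp. $g-\mu\varphi$) is convex on the relative interior of $\mathcal{C}$ (here, the positive definite density matrices). *)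

(* Defs.v *)
From mathcomp Require Import all_boot all_order all_algebra.
From mathcomp Require Import complex.
From mathcomp Require Import reals exp.
Set Implicit Arguments.
Unset Strict Implicit.
Unset Printing Implicit Defensive.
Import Order.TTheory GRing.Theory Num.Theory.
Local Open Scope ring_scope.

Section QuantumDefs.
Variable R : realType.
Local Notation C := R[i].

Definition adjmx m n (A : 'M[C]_(m, n)) : 'M[C]_(n, m) := (map_mx Num.conj A)^T.

Definition hermitian n (A : 'M[C]_n) : Prop := adjmx A = A.

Definition psd n (A : 'M[C]_n) : Prop :=
  hermitian A /\ forall v : 'rV[C]_n, 0 <= (v *m A *m adjmx v) 0 0.

Definition posdef n (A : 'M[C]_n) : Prop :=
  hermitian A /\ forall v : 'rV[C]_n, v != 0 -> 0 < (v *m A *m adjmx v) 0 0.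

Definition density n (A : 'M[C]_n) : Prop := psd A /\ \tr A = 1.

(* relative interior of D(H): positive definite density matrices *)
Definition density_pd n (A : 'M[C]_n) : Prop := posdef A /\ \tr A = 1.

(* eigenvalues of a Hermitian matrix, via the spectral decomposition
   A = invmx U *m diag_mx d *m U of spectral.v (they are real) *)
Definition eigval n (A : 'M[C]_n) (i : 'I_n) : R :=
  complex.Re (spectral_diag A 0 i).

Definition lambda_max n (A : 'M[C]_n.+1) : R :=
  \big[Num.max/eigval A ord0]_(i < n.+1) eigval A i.

Definition lambda_min n (A : 'M[C]_n.+1) : R :=
  \big[Num.min/eigval A ord0]_(i < n.+1) eigval A i.

(* matrix logarithm through the spectral decomposition (functional calculus);
   with MathComp-Analysis' convention ln 0 = 0, i.e. 0 log 0 = 0 *)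
Definition logm n (A : 'M[C]_n) : 'M[C]_n :=
  invmx (spectralmx A) *m
  diag_mx (\row_i ((ln (eigval A i))%:C%C : C)) *m spectralmx A.

Definition qrel_entropy n (rho sigma : 'M[C]_n) : R :=
  complex.Re (\tr (rho *m (logm rho - logm sigma))).

Definition neglogdet n (sigma : 'M[C]_n) : R := - ln (complex.Re (\det sigma)).

Definition convex_on_pd n (f : 'M[C]_n -> R) : Prop :=
  forall (x y : 'M[C]_n) (t : R), density_pd x -> density_pd y ->
    0 <= t <= 1 ->
    f ((t%:C%C : C) *: x + ((1 - t)%:C%C : C) *: y) <= t * f x + (1 - t) * f y.

Definition rel_smooth n (L : R) (g phi : 'M[C]_n -> R) : Prop :=
  convex_on_pd (fun x => L * phi x - g x).

Definition rel_strongly_convex n (mu : R) (g phi : 'M[C]_n -> R) : Prop :=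
  convex_on_pd (fun x => g x - mu * phi x).

End QuantumDefs.

(* Main.v *)
Require Import Defs.
From mathcomp Require Import all_boot all_order all_algebra.
From mathcomp Require Import complex.
From mathcomp Require Import reals exp.
From mathcomp Require Import ring lra.
Import Order.TTheory GRing.Theory Num.Theory.
Local Open Scope ring_scope.

Module Aux.
Local Open Scope sesquilinear_scope.
Section Scal.
Variable R : realType.
Implicit Types a b x : R.

Lemma lnsub a b : 0 < a -> 0 < b -> ln b - ln a <= b / a - 1.
Proof.
move=> a0 b0; rewrite -ln_div ?posrE //.
have -> : ln (b / a) = ln (1 + (b / a - 1)) by congr ln; ring.
apply: le_ln1Dx; rewrite ltrBrDl subrr; exact: divr_gt0.
Qed.

Arguments lnsub {a b}.
Definition Tsum a N := \sum_(j < N) (a + j%:R)^-1 - (ln (a + N%:R) - ln a).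

Lemma T_bounds a N : 0 < a -> 0 <= Tsum a N <= a^-1 - (a + N%:R)^-1.
Proof.
move=> a0; elim: N => [|N IH].
  by rewrite /Tsum big_ord0 addr0 !subrr lexx.
have p0 : 0 < a + N%:R by rewrite ltr_wpDr ?ler0n.
have p1 : 0 < a + N%:R + 1 by rewrite ltr_wpDr ?ler01.
have E : Tsum a N.+1 = Tsum a N + (a + N%:R)^-1 -
  (ln (a + N%:R + 1) - ln (a + N%:R)).
  rewrite /Tsum big_ord_recr /= -natr1 addrA; ring.
have h1 := lnsub p0 p1.
have h2 := lnsub p1 p0.
have e1 : (a + N%:R + 1) / (a + N%:R) - 1 = (a + N%:R)^-1.
  by field; rewrite gt_eqF.
have e2 : (a + N%:R) / (a + N%:R + 1) - 1 = - (a + N%:R + 1)^-1.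
  by field; rewrite gt_eqF.
rewrite e1 in h1; rewrite e2 in h2.
rewrite E -natr1 addrA; move: IH => /andP[IH1 IH2].
have i0 : 0 <= (a + N%:R + 1)^-1 by rewrite invr_ge0 ltW.
apply/andP; split; lra.
Qed.

Definition gk (k : nat) x :=
  \sum_(j < k * k) ((k%:R + j%:R)^-1 - (k%:R * x + j%:R)^-1).

Lemma gk_approx k x : 0 < x -> (0 < k)%N ->
  `|gk k x - ln x| <= (1 + x^-1 + `|1 - x|) / k%:R.
Proof.
move=> x0 k0.
have kp : 0 < k%:R :> R by rewrite ltr0n.
have kx : 0 < k%:R * x by rewrite mulr_gt0.
set N := (k * k)%N.
have E : gk k x - ln x = Tsum k%:R N - Tsum (k%:R * x) N +
   (ln (k%:R + N%:R) - ln (k%:R * x + N%:R)).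
  rewrite /gk /Tsum sumrB lnM ?posrE //; ring.
have /andP[t1 t2] := @T_bounds k%:R N kp.
have /andP[t3 t4] := @T_bounds (k%:R * x) N kx.
have Np : 0 < N%:R :> R by rewrite ltr0n muln_gt0 k0.
have q1 : 0 < k%:R + N%:R :> R by rewrite addr_gt0.
have q2 : 0 < k%:R * x + N%:R :> R by rewrite addr_gt0.
have h1 := lnsub q2 q1.
have h2 := lnsub q1 q2.
have i1 : 0 <= (k%:R + N%:R :> R)^-1 by rewrite invr_ge0 ltW.
have i2 : 0 <= (k%:R * x + N%:R :> R)^-1 by rewrite invr_ge0 ltW.
have NE : N%:R = k%:R * k%:R :> R by rewrite /N natrM.
have b1 : (k%:R + N%:R) / (k%:R * x + N%:R) - 1 <= `|1 - x| / k%:R.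
  have -> : (k%:R + N%:R) / (k%:R * x + N%:R) - 1 =
     k%:R * (1 - x) / (k%:R * x + N%:R) by field; rewrite gt_eqF.
  rewrite ler_pdivrMr // mulrAC ler_pdivlMr //.
  have := ler_norm (1 - x); have := normr_ge0 (1 - x); rewrite NE; nra.
have b2 : (k%:R * x + N%:R) / (k%:R + N%:R) - 1 <= `|1 - x| / k%:R.
  have -> : (k%:R * x + N%:R) / (k%:R + N%:R) - 1 =
     k%:R * (x - 1) / (k%:R + N%:R) by field; rewrite gt_eqF.
  rewrite ler_pdivrMr // mulrAC ler_pdivlMr //.
  have := ler_norm (1 - x); have := ler_norm (x - 1); rewrite distrC.
  have := normr_ge0 (1 - x); rewrite NE; nra.
have c1 : (k%:R * x)^-1 = x^-1 / k%:R by rewrite invfM mulrC.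
rewrite c1 in t4.
have e : (1 + x^-1 + `|1 - x|) / k%:R = k%:R^-1 + x^-1 / k%:R + `|1 - x| / k%:R.
  by rewrite !mulrDl mul1r.
rewrite E e ler_norml; apply/andP; split; lra.
Qed.
Lemma archi_le (a b K : R) : 0 <= K ->
  (forall k : nat, (0 < k)%N -> b - K / k%:R <= a) -> b <= a.
Proof.
move=> K0 h; rewrite leNgt; apply/negP => ab.
have d0 : 0 < b - a by rewrite subr_gt0.
have q0 : 0 <= K / (b - a) by rewrite divr_ge0 // ltW.
have := archi_boundP q0; set m := Num.bound _ => hm.
have k0 : (0 < m.+1)%N by [].
have := h _ k0.
have kp : 0 < m.+1%:R :> R by rewrite ltr0n.
have hm' : K / (b - a) < m.+1%:R by rewrite (lt_le_trans hm) // ler_nat.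
rewrite ltr_pdivrMr // in hm'.
have : K / m.+1%:R < b - a by rewrite ltr_pdivrMr // mulrC.
move=> H1 H2; move: (H2) (H1); set u := K / _; move=> *; lra.
Qed.

Lemma L1 (a b c : R) : 0 <= a - b - b + c -> 2 * b - a <= c.
Proof. lra. Qed.

Lemma L2 (t q qX qY iX iY : R) : 0 <= t -> t <= 1 ->
  t * (2 * q - qX) <= t * iX -> (1 - t) * (2 * q - qY) <= (1 - t) * iY ->
  t * qX + (1 - t) * qY = q -> q <= t * iX + (1 - t) * iY.
Proof. nra. Qed.

Lemma L4 (t PM Px Py qM qx qy KM Kx Ky kk : R) : 0 <= t -> t <= 1 ->
  0 <= KM / kk -> 0 <= Kx / kk -> 0 <= Ky / kk ->
  - (KM / kk) <= PM - qM -> PM - qM <= KM / kk ->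
  - (Kx / kk) <= Px - qx -> Px - qx <= Kx / kk ->
  - (Ky / kk) <= Py - qy -> Py - qy <= Ky / kk ->
  t * Px + (1 - t) * Py <= PM ->
  t * qx + (1 - t) * qy - (KM + Kx + Ky) / kk <= qM.
Proof.
have -> : (KM + Kx + Ky) / kk = KM / kk + Kx / kk + Ky / kk by rewrite !mulrDl.
move: (KM / kk) (Kx / kk) (Ky / kk) => a b c; nra.
Qed.
Lemma L5 (c P Q Z t : R) : t * P + (1 - t) * Q <= Z ->
  c - Z <= t * (c - P) + (1 - t) * (c - Q).
Proof.
move=> h; have -> : t * (c - P) + (1 - t) * (c - Q) = c - (t * P + (1 - t) * Q) by ring.
exact: lerB.
Qed.
Lemma L6 (I : finType) (t : R) (a F G : I -> R) :
  \sum_i a i * (t * F i + (1 - t) * G i) =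
  t * \sum_i a i * F i + (1 - t) * \sum_i a i * G i.
Proof.
rewrite !mulr_sumr -big_split; apply: eq_bigr => i _ /=; ring.
Qed.
Lemma L7 (I : finType) (L c : R) (r K : I -> R) :
  L * - (\sum_i K i) - (c - \sum_i r i * K i) = - c - \sum_i (L - r i) * K i.
Proof.
have -> : \sum_i (L - r i) * K i = \sum_i L * K i - \sum_i r i * K i.
  by rewrite -sumrB; apply: eq_bigr => i _; ring.
rewrite mulrN mulr_sumr; ring.
Qed.

Lemma L8 (I : finType) (m c : R) (r K : I -> R) :
  c - \sum_i r i * K i - m * - (\sum_i K i) = c - \sum_i (r i - m) * K i.
Proof.
have -> : \sum_i (r i - m) * K i = \sum_i r i * K i - \sum_i m * K i.
  by rewrite -sumrB; apply: eq_bigr => i _; ring.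
rewrite mulrN mulr_sumr; ring.
Qed.
End Scal.
Arguments gk {R}.
Arguments archi_le {R}.
Arguments gk_approx {R}.
Arguments L1 {R}.
Arguments L2 {R t q qX qY iX iY}.
Arguments L4 {R t PM Px Py qM qx qy KM Kx Ky kk}.

Section M.
Variable R : realType.
Local Notation C := R[i].

Lemma adjE m p (A : 'M[C]_(m, p)) : adjmx A = A ^t*.
Proof. by rewrite /adjmx map_trmx. Qed.

Lemma adjmxK m p (A : 'M[C]_(m, p)) : adjmx (adjmx A) = A.
Proof. by rewrite !adjE trmxCK. Qed.

Arguments adjmxK {m p}.
Lemma adjmxM m p q (A : 'M[C]_(m, p)) (B : 'M[C]_(p, q)) :
  adjmx (A *m B) = adjmx B *m adjmx A.
Proof. by rewrite /adjmx map_mxM trmx_mul. Qed.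

Lemma adjmxD m p (A B : 'M[C]_(m, p)) : adjmx (A + B) = adjmx A + adjmx B.
Proof. by rewrite /adjmx map_mxD linearD. Qed.

Lemma adjmxN m p (A : 'M[C]_(m, p)) : adjmx (- A) = - adjmx A.
Proof. by rewrite /adjmx map_mxN linearN. Qed.

Variable n : nat.


Lemma herm_normal {A : 'M[C]_n} : Defs.hermitian A -> A \is normalmx.
Proof. by move=> hA; apply/normalmxP; rewrite -adjE hA. Qed.

Definition DM (U : 'M[C]_n) (r : 'I_n -> R) :=
  adjmx U *m diag_mx (\row_i ((r i)%:C)%C) *m U.

Lemma U_unitary (A : 'M[C]_n) : spectralmx A *m adjmx (spectralmx A) = 1%:M.
Proof. by rewrite adjE; apply/unitarymxP/spectral_unitarymx. Qed.

Lemma U_inv (A : 'M[C]_n) : invmx (spectralmx A) = adjmx (spectralmx A).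
Proof. by rewrite adjE invmx_unitary // spectral_unitarymx. Qed.

Lemma U_unitary' (A : 'M[C]_n) : adjmx (spectralmx A) *m spectralmx A = 1%:M.
Proof. by rewrite -U_inv mulVmx // spectral_unit. Qed.

Lemma herm_DM {A : 'M[C]_n} : Defs.hermitian A -> A = DM (spectralmx A) (eigval A).
Proof.
move=> hA; have hA' : adjmx A = A := hA.
have /orthomx_spectralP {1}-> := herm_normal hA.
rewrite /DM U_inv; congr (_ *m diag_mx _ *m _).
apply/rowP => i; rewrite mxE /eigval.
have /mxOverP := @hermitian_spectral_diag_real _ _ A
  ltac:(by apply/is_hermitianmxP; rewrite expr0 scale1r -adjE hA').
move=> /(_ 0 i) hr. by rewrite RRe_real.
Qed.

Lemma logm_DM (A : 'M[C]_n) : logm A = DM (spectralmx A) (fun i => ln (eigval A i)).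
Proof. by rewrite /logm /DM U_inv. Qed.


Lemma ReD (x y : C) : complex.Re (x + y) = complex.Re x + complex.Re y. Proof. by case: x => a b; case: y => c d. Qed.
Lemma Re0 : complex.Re (0 : C) = 0. Proof. by []. Qed.
Lemma ReN (x : C) : complex.Re (- x) = - complex.Re x. Proof. by case: x => a b. Qed.
Lemma ReRM (r : R) (x : C) : complex.Re ((r%:C)%C * x) = r * complex.Re x.
Proof. by case: x => a b /=; rewrite mul0r subr0. Qed.
Lemma ReJ (x : C) : complex.Re (Num.conj x) = complex.Re x. Proof. by case: x => a b. Qed.
Lemma Re_sum (I : Type) (s : seq I) (P : pred I) (F : I -> C) :
  complex.Re (\sum_(i <- s | P i) F i) = \sum_(i <- s | P i) complex.Re (F i).
Proof. exact: (big_morph _ ReD Re0). Qed.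

Lemma conjR (x : R) : Num.conj ((x%:C)%C : C) = (x%:C)%C.
Proof. apply/eqP; rewrite eq_complex /= oppr0 !eqxx. done. Qed.

Definition qf (A : 'M[C]_n) (v : 'rV[C]_n) : R := complex.Re ((v *m A *m adjmx v) 0 0).
Definition wt (U : 'M[C]_n) (v : 'rV[C]_n) (i : 'I_n) : R :=
  complex.Re ((v *m adjmx U) 0 i * Num.conj ((v *m adjmx U) 0 i)).

Lemma wt_ge0 U v i : 0 <= wt U v i.
Proof.
rewrite /wt -normCK.
have : (0 : C) <= `|(v *m adjmx U) 0 i| ^+ 2 by exact: exprn_ge0 (normr_ge0 _).
by rewrite lecE => /andP[_].
Qed.

Lemma qf_DM U r v : qf (DM U r) v = \sum_i r i * wt U v i.
Proof.
have E : U *m adjmx v = adjmx (v *m adjmx U) by rewrite adjmxM adjmxK.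
rewrite /qf /DM !mulmxA -[_ *m U *m adjmx v]mulmxA E.
rewrite /wt; move: (v *m adjmx U) => w.
have Ew : forall j, adjmx w j 0 = Num.conj (w 0 j) by move=> j; rewrite /adjmx !mxE.
rewrite mul_mx_diag mxE Re_sum; apply: eq_bigr => i _.
by rewrite Ew !mxE mulrAC mulrC ReRM.
Qed.

Lemma qfD A B v : qf (A + B) v = qf A v + qf B v.
Proof. by rewrite /qf mulmxDr mulmxDl mxE ReD. Qed.

Lemma qfZ (r : R) A v : qf ((r%:C)%C *: A) v = r * qf A v.
Proof. by rewrite /qf -scalemxAr -scalemxAl mxE ReRM. Qed.

Lemma qfN A v : qf (- A) v = - qf A v.
Proof. by rewrite /qf mulmxN mulNmx mxE ReN. Qed.

Lemma DM_ext U r s : (forall i, r i = s i) -> DM U r = DM U s.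
Proof.
by move=> h; rewrite /DM; congr (_ *m diag_mx _ *m _); apply/rowP => i; rewrite !mxE h.
Qed.

Lemma DM_const (A : 'M[C]_n) (c : R) :
  DM (spectralmx A) (fun _ => c) = (c%:C)%C%:M.
Proof.
rewrite /DM -diag_const_mx.
have -> : \row_i ((c%:C)%C : C) = const_mx (c%:C)%C :> 'rV_n by apply/matrixP => i j; rewrite !mxE.
rewrite diag_const_mx -scalemx1 -scalemxAr -scalemxAl mulmx1 U_unitary'.
by rewrite scalemx1.
Qed.

Lemma sum_wt A v : \sum_i wt (spectralmx A) v i = qf 1%:M v.
Proof.
rewrite -(DM_const A 1) qf_DM; apply: eq_bigr => i _; by rewrite mul1r.
Qed.


Section DMA.
Variable A : 'M[C]_n.
Local Notation U := (spectralmx A).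

Lemma DM_lin (a b : R) r s :
  (a%:C)%C *: DM U r + (b%:C)%C *: DM U s = DM U (fun i => a * r i + b * s i).
Proof.
have scl : forall (c : C) (X D Y : 'M[C]_n), c *: (X *m D *m Y) = X *m (c *: D) *m Y.
  by move=> c X D Y; rewrite -scalemxAr -scalemxAl.
rewrite /DM !scl -mulmxDl -mulmxDr; congr (_ *m _ *m _).
apply/matrixP => i j; rewrite !mxE.
by case: (i == j); rewrite ?mulr1n ?mulr0n ?mulr0 ?addr0 // rmorphD !rmorphM.
Qed.

Lemma DM_mul r s : DM U r *m DM U s = DM U (fun i => r i * s i).
Proof.
rewrite /DM !mulmxA -[_ *m U *m adjmx U]mulmxA U_unitary mulmx1.
rewrite -[_ *m diag_mx _ *m diag_mx _]mulmxA mulmx_diag; congr (_ *m diag_mx _ *m _).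
by apply/rowP => i; rewrite !mxE rmorphM.
Qed.

Lemma DM_herm r : adjmx (DM U r) = DM U r.
Proof.
rewrite /DM !adjmxM adjmxK mulmxA; congr (_ *m _ *m _).
apply/matrixP => i j; rewrite /adjmx !mxE eq_sym.
have [->|_] := eqVneq i j; rewrite ?mulr1n ?mulr0n ?rmorph0 //.
exact: conjR.
Qed.

Lemma DM_inv r : (forall i, r i != 0) ->
  DM U r \in unitmx /\ invmx (DM U r) = DM U (fun i => (r i)^-1).
Proof.
move=> nz.
have E : DM U r *m DM U (fun i => (r i)^-1) = 1%:M.
  rewrite DM_mul -(DM_const A 1); apply: DM_ext => i.
  by rewrite mulfV.
have [u1 _] := mulmx1_unit E; split => //.
by rewrite -[LHS]mulmx1 -E mulKmx.
Qed.

Lemma DM_psd r : (forall i, 0 <= r i) -> forall v, 0 <= qf (DM U r) v.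
Proof.
move=> h v; rewrite qf_DM; apply: sumr_ge0 => i _; exact: mulr_ge0 (h i) (wt_ge0 _ _ _).
Qed.
End DMA.


Lemma adjmxZr m p (r : R) (A : 'M[C]_(m, p)) :
  adjmx ((r%:C)%C *: A) = (r%:C)%C *: adjmx A.
Proof. by apply/matrixP => i j; rewrite /adjmx !mxE rmorphM /= conjR. Qed.

Lemma adjmx_inv (X : 'M[C]_n) : adjmx (invmx X) = invmx (adjmx X).
Proof. by rewrite /adjmx map_invmx trmx_inv. Qed.

Lemma qf_sub X w y : qf X (w - y) = qf X w - complex.Re ((w *m X *m adjmx y) 0 0)
  - complex.Re ((y *m X *m adjmx w) 0 0) + qf X y.
Proof.
rewrite /qf adjmxD adjmxN !mulmxDl !mulNmx !mulmxDr !mulmxN !mxE !ReD !ReN.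
ring.
Qed.

Lemma inv_var {X : 'M[C]_n} : adjmx X = X -> X \in unitmx ->
  (forall w, 0 <= qf X w) -> forall v w,
  2 * complex.Re ((w *m adjmx v) 0 0) - qf X w <= qf (invmx X) v.
Proof.
move=> hX uX pX v w.
set y := v *m invmx X.
have h1 : y *m X = v by rewrite /y mulmxKV.
have h2 : X *m adjmx y = adjmx v.
  by rewrite /y adjmxM adjmx_inv hX mulmxA mulmxV // mul1mx.
have := pX (w - y); rewrite qf_sub.
rewrite -mulmxA h2 h1.
have -> : qf X y = qf (invmx X) v.
  by rewrite /qf h1 /y adjmxM adjmx_inv hX mulmxA.
have -> : complex.Re ((v *m adjmx w) 0 0) = complex.Re ((w *m adjmx v) 0 0).
  by rewrite -[in LHS](adjmxK v) -adjmxM /adjmx !mxE ReJ.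
exact: L1.
Qed.

Lemma inv_convex {X Y : 'M[C]_n} {t : R} :
  adjmx X = X -> X \in unitmx -> (forall w, 0 <= qf X w) ->
  adjmx Y = Y -> Y \in unitmx -> (forall w, 0 <= qf Y w) ->
  0 <= t <= 1 ->
  (t%:C)%C *: X + ((1 - t)%:C)%C *: Y \in unitmx ->
  forall v, qf (invmx ((t%:C)%C *: X + ((1 - t)%:C)%C *: Y)) v <=
    t * qf (invmx X) v + (1 - t) * qf (invmx Y) v.
Proof.
move=> hX uX pX hY uY pY /andP[t0 t1] uZ v.
set Z := _ + _.
have hZ : adjmx Z = Z.
  by rewrite /Z adjmxD !adjmxZr hX hY.
set y := v *m invmx Z.
have e1 : qf Z y = qf (invmx Z) v.
  by rewrite /qf /y mulmxKV // adjmxM adjmx_inv hZ mulmxA.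
have e2 : complex.Re ((y *m adjmx v) 0 0) = qf (invmx Z) v by [].
have e3 : qf Z y = t * qf X y + (1 - t) * qf Y y by rewrite /Z qfD !qfZ.
have i1 := inv_var hX uX pX v y.
have i2 := inv_var hY uY pY v y.
rewrite e2 in i1 i2.
have t0' : 0 <= 1 - t by rewrite subr_ge0.
have j1 := ler_wpM2l t0 i1.
have j2 := ler_wpM2l t0' i2.
have E : t * qf X y + (1 - t) * qf Y y = qf (invmx Z) v by rewrite -e3 e1.
exact: (L2 t0 t1 j1 j2 E).
Qed.


Definition hpos (A : 'M[C]_n) := Defs.hermitian A /\ forall i, 0 < eigval A i.

Lemma posdef_hpos {A} : posdef A -> hpos A.
Proof.
move=> [hA pA]; split=> // k.
set u := row k (spectralmx A).
have w_eq : u *m adjmx (spectralmx A) = row k 1%:M by rewrite /u -row_mul U_unitary.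
have qfe : qf A u = eigval A k.
  rewrite {1}(herm_DM hA) qf_DM (bigD1 k) //= big1 => [|i ik].
    by rewrite /wt /u -row_mul U_unitary !mxE eqxx /= oppr0 mulr0 subr0 !mulr1 addr0.
  by rewrite /wt /u -row_mul U_unitary !mxE eq_sym (negbTE ik) /= oppr0 !mul0r subr0 mulr0.
have u0 : u != 0.
  apply/negP => /eqP u0; move: w_eq; rewrite u0 mul0mx => /matrixP /(_ 0 k).
  by rewrite !mxE eqxx mulr1n => /eqP; rewrite eq_sym oner_eq0.
have := pA u u0; rewrite ltcE => /andP[_]; by rewrite -qfe.
Qed.

Lemma rC1 : ((1%:C)%C : C) = 1. Proof. exact: rmorph1. Qed.

Lemma rCB (a b : R) : (((a - b)%:C)%C : C) = (a%:C)%C - (b%:C)%C. Proof. exact: rmorphB. Qed.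

Lemma conv_herm (x y : 'M[C]_n) (t : R) : Defs.hermitian x -> Defs.hermitian y ->
  Defs.hermitian ((t%:C)%C *: x + ((1 - t)%:C)%C *: y).
Proof. by move=> hx hy; rewrite /Defs.hermitian adjmxD !adjmxZr hx hy. Qed.

Lemma conv_posdef {x y : 'M[C]_n} {t : R} : posdef x -> posdef y -> 0 <= t <= 1 ->
  posdef ((t%:C)%C *: x + ((1 - t)%:C)%C *: y).
Proof.
move=> [hx px] [hy py] /andP[t0 t1]; split; first exact: conv_herm.
move=> v v0; rewrite mulmxDr mulmxDl -!scalemxAr -!scalemxAl.
have := px v v0; have := py v v0.
move: (v *m x *m adjmx v) (v *m y *m adjmx v) => P Q pb pa.
rewrite !mxE.
move: (P 0 0) (Q 0 0) pa pb => a b pa pb.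
have [t0'|] := eqVneq t 0.
  by rewrite t0' subr0 rC1 mul1r rmorph0 mul0r add0r.
move=> tn0; have tp : 0 < t by rewrite lt0r tn0.
rewrite ltr_pwDl ?mulr_gt0 ?ltcR //.
apply: mulr_ge0; last exact: ltW. by rewrite ler0c subr_ge0.
Qed.

Definition rs (A : 'M[C]_n) (k j : R) := (k%:C)%C *: A + ((j%:C)%C)%:M.

Lemma rs_DM A k j : Defs.hermitian A ->
  rs A k j = DM (spectralmx A) (fun i => k * eigval A i + j).
Proof.
move=> hA; rewrite /rs {1}(herm_DM hA) -(DM_const A j) -[X in _ + X]scale1r -rC1.
by rewrite DM_lin; apply: DM_ext => i; rewrite mul1r.
Qed.

Lemma rs_props A (k j : R) : hpos A -> 0 < k -> 0 <= j ->
  [/\ adjmx (rs A k j) = rs A k j, rs A k j \in unitmx,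
      (forall w, 0 <= qf (rs A k j) w) &
      forall v, qf (invmx (rs A k j)) v =
         \sum_i wt (spectralmx A) v i / (k * eigval A i + j)].
Proof.
move=> [hA pA] k0 j0.
have pos : forall i, 0 < k * eigval A i + j by move=> i; rewrite ltr_pwDl ?mulr_gt0.
have [u e] := @DM_inv A (fun i => k * eigval A i + j) (fun i => lt0r_neq0 (pos i)).
rewrite rs_DM //; split => //.
- exact: DM_herm.
- by apply: DM_psd => i; exact: ltW.
- by move=> v; rewrite e qf_DM; apply: eq_bigr => i _; rewrite mulrC.
Qed.

Lemma rs_conv (x y : 'M[C]_n) (t k j : R) :
  rs ((t%:C)%C *: x + ((1 - t)%:C)%C *: y) k j =
  (t%:C)%C *: rs x k j + ((1 - t)%:C)%C *: rs y k j.
Proof.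
apply/matrixP => a b; rewrite /rs !mxE rCB rC1.
set T := (t%:C)%C; set K := (k%:C)%C. ring.
Qed.


Definition Phi (k : nat) (A : 'M[C]_n) v :=
  \sum_(j < k * k) (qf 1%:M v / (k%:R + j%:R) - qf (invmx (rs A k%:R j%:R)) v).

Lemma Phi_eq k A v : hpos A -> (0 < k)%N ->
  Phi k A v = \sum_i wt (spectralmx A) v i * gk k (eigval A i).
Proof.
move=> hA k0.
have kp : 0 < k%:R :> R by rewrite ltr0n.
rewrite /Phi /gk.
under eq_bigr => j _.
  have [_ _ _ ->] := rs_props A k%:R j%:R hA kp (ler0n _ _).
  rewrite -(sum_wt A) mulr_suml -sumrB.
  over.
rewrite exchange_big /=; apply: eq_bigr => i _.
rewrite mulr_sumr; apply: eq_bigr => j _.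
by rewrite mulrBr.
Qed.

Lemma Phi_concave k (x y : 'M[C]_n) (t : R) v :
  hpos x -> hpos y -> hpos ((t%:C)%C *: x + ((1 - t)%:C)%C *: y) -> 0 <= t <= 1 ->
  t * Phi k x v + (1 - t) * Phi k y v <= Phi k ((t%:C)%C *: x + ((1 - t)%:C)%C *: y) v.
Proof.
move=> hx hy hM t01.
rewrite /Phi !mulr_sumr -big_split /=; apply: ler_sum => j _.
have [kp|k0] := posnP k.
  by case: j => m; rewrite kp.
have kp : 0 < k%:R :> R by rewrite ltr0n.
have [hX uX pX _] := rs_props x k%:R j%:R hx kp (ler0n _ _).
have [hY uY pY _] := rs_props y k%:R j%:R hy kp (ler0n _ _).
have [_ uZ _ _] := rs_props _ k%:R j%:R hM kp (ler0n _ _).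
rewrite rs_conv in uZ *.
have := inv_convex hX uX pX hY uY pY t01 uZ v.
set c := qf 1%:M v / _.
set a := qf (invmx (rs x _ _)) v.
set b := qf (invmx (rs y _ _)) v.
set z := qf _ v.
have -> : t * (c - a) + (1 - t) * (c - b) = c - (t * a + (1 - t) * b) by ring.
by move=> h; apply: lerB.
Qed.

Definition Kc (A : 'M[C]_n) v :=
  \sum_i wt (spectralmx A) v i * (1 + (eigval A i)^-1 + `|1 - eigval A i|).

Lemma Kc_ge0 A v : hpos A -> 0 <= Kc A v.
Proof.
move=> hA; apply: sumr_ge0 => i _; apply: mulr_ge0; first exact: wt_ge0.
have := hA.2 i => l0.
by rewrite addr_ge0 ?normr_ge0 // addr_ge0 ?ler01 // invr_ge0 ltW.
Qed.

Lemma log_approx k A v : hpos A -> (0 < k)%N ->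
  `|Phi k A v - qf (logm A) v| <= Kc A v / k%:R.
Proof.
move=> hA k0; rewrite Phi_eq // logm_DM qf_DM -sumrB /Kc mulr_suml.
apply: le_trans (ler_norm_sum _ _ _) _; apply: ler_sum => i _.
rewrite [ln _ * _]mulrC -mulrBr normrM ger0_norm ?wt_ge0 // -mulrA.
apply: ler_wpM2l; first exact: wt_ge0.
exact: gk_approx (hA.2 i) k0.
Qed.


Lemma log_concave (x y : 'M[C]_n) (t : R) v :
  hpos x -> hpos y -> hpos ((t%:C)%C *: x + ((1 - t)%:C)%C *: y) -> 0 <= t <= 1 ->
  t * qf (logm x) v + (1 - t) * qf (logm y) v <=
  qf (logm ((t%:C)%C *: x + ((1 - t)%:C)%C *: y)) v.
Proof.
move=> hx hy hM t01.
set M := _ + _ in hM *.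
apply: (archi_le _ _ (Kc M v + Kc x v + Kc y v)).
  by rewrite !addr_ge0 ?Kc_ge0.
move=> k k0.
have kp : 0 < k%:R :> R by rewrite ltr0n.
have := log_approx k M v hM k0; rewrite ler_norml => /andP[a1 a2].
have := log_approx k x v hx k0; rewrite ler_norml => /andP[b1 b2].
have := log_approx k y v hy k0; rewrite ler_norml => /andP[c1 c2].
have P := Phi_concave k x y t v hx hy hM t01.
rewrite -/M in P.
have eM : 0 <= Kc M v / k%:R by rewrite divr_ge0 ?Kc_ge0 // ltW.
have ex : 0 <= Kc x v / k%:R by rewrite divr_ge0 ?Kc_ge0 // ltW.
have ey : 0 <= Kc y v / k%:R by rewrite divr_ge0 ?Kc_ge0 // ltW.
move: t01 => /andP[t0 t1].
exact: (L4 t0 t1 eM ex ey a1 a2 b1 b2 c1 c2 P).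
Qed.


Lemma tr_DM U r (X : 'M[C]_n) :
  \tr (DM U r *m X) = \sum_k ((r k)%:C)%C * (row k U *m X *m adjmx (row k U)) 0 0.
Proof.
rewrite /DM -!mulmxA mxtrace_mulC /mxtrace; apply: eq_bigr => k _.
have -> : adjmx (row k U) = col k (adjmx U) by apply/matrixP => i j; rewrite !mxE.
rewrite -row_mul mul_diag_mx.
move: (U *m X) (adjmx U) => P Q.
rewrite !mxE mulr_sumr; apply: eq_bigr => j _; rewrite !mxE mulrA.
done.
Qed.

Lemma tr_DM_diag (A : 'M[C]_n) r :
  \tr (DM (spectralmx A) r) = \sum_i ((r i)%:C)%C.
Proof.
rewrite /DM mxtrace_mulC mulmxA U_unitary mul1mx mxtrace_diag.
by apply: eq_bigr => i _; rewrite mxE.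
Qed.

Lemma Re_tr_DM U r X : complex.Re (\tr (DM U r *m X)) =
  \sum_k r k * qf X (row k U).
Proof. by rewrite tr_DM Re_sum; apply: eq_bigr => k _; rewrite ReRM. Qed.

Lemma ln_prod (I : Type) (s : seq I) (F : I -> R) :
  (forall i, 0 < F i) -> ln (\prod_(i <- s) F i) = \sum_(i <- s) ln (F i).
Proof.
move=> h; elim: s => [|a s IH]; first by rewrite !big_nil ln1.
rewrite !big_cons lnM ?IH // posrE //.
by apply: prodr_gt0 => i _.
Qed.

Lemma lndet (x : 'M[C]_n) : hpos x ->
  ln (complex.Re (\det x)) = complex.Re (\tr (logm x)).
Proof.
move=> [hx px].
rewrite logm_DM tr_DM_diag Re_sum {1}(herm_DM hx) /DM !det_mulmx mulrAC -det_mulmx.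
rewrite U_unitary' det1 mul1r det_diag.
have -> : \prod_i (\row_i0 ((eigval x i0)%:C)%C : 'rV[C]_n) 0 i =
  ((\prod_i eigval x i)%:C)%C by rewrite rmorph_prod; apply: eq_bigr => i _; rewrite mxE.
rewrite /= ln_prod //; by apply: eq_bigr.
Qed.

Lemma le_bigmax_seq (I : eqType) (s : seq I) (F : I -> R) (x0 : R) k :
  k \in s -> F k <= \big[Num.max/x0]_(i <- s) F i.
Proof.
elim: s => // a s IH; rewrite inE big_cons le_max => /orP[/eqP->|/IH->];
  by rewrite ?lexx ?orbT.
Qed.

Lemma ge_bigmin_seq (I : eqType) (s : seq I) (F : I -> R) (x0 : R) k :
  k \in s -> \big[Num.min/x0]_(i <- s) F i <= F k.
Proof.
elim: s => // a s IH; rewrite inE big_cons ge_min => /orP[/eqP->|/IH->];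
  by rewrite ?lexx ?orbT.
Qed.

Lemma conv_of (f : 'M[C]_n -> R) (a : 'I_n -> R) (c : R) (us : 'I_n -> 'rV[C]_n) :
  (forall k, 0 <= a k) ->
  (forall x, hpos x -> f x = c - \sum_k a k * qf (logm x) (us k)) ->
  convex_on_pd f.
Proof.
move=> a0 hf x y t [px _] [py _] t01.
have hx := posdef_hpos px; have hy := posdef_hpos py.
have hM := posdef_hpos (conv_posdef px py t01).
rewrite (hf _ hM) (hf _ hx) (hf _ hy).
have S : \sum_k a k * (t * qf (logm x) (us k) + (1 - t) * qf (logm y) (us k)) <=
  \sum_k a k * qf (logm ((t%:C)%C *: x + ((1 - t)%:C)%C *: y)) (us k).
  apply: ler_sum => k _; apply: ler_wpM2l; first exact: a0.
  exact: (log_concave x y t (us k) hx hy hM t01).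
rewrite L6 in S.
exact: L5 S.
Qed.

End M.

Arguments hpos {R n}.
Arguments qf {R n}.
Arguments DM {R n}.
Arguments Re_tr_DM {R n}.
Arguments lndet {R n}.
Arguments DM_const {R n}.
Arguments conv_of {R n}.
Arguments herm_DM {R n A}.
Arguments rC1 {R}.
Arguments L7 {R}.
Arguments L8 {R}.
Arguments le_bigmax_seq {R}.
Arguments ge_bigmin_seq {R}.
Arguments ReD {R}.
Arguments ReN {R}.

End Aux.
Import Aux.

(* H = C^(n+1) (every nonzero finite dimension; D(C^0) is empty). *)
Theorem mainTheorem10 (R : realType) (n : nat) (rho : 'M[R[i]]_n.+1) :
  density rho ->
  rel_smooth (lambda_max rho) (qrel_entropy rho) (@neglogdet R n.+1) /\
  rel_strongly_convex (lambda_min rho) (qrel_entropy rho) (@neglogdet R n.+1).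
Proof.
move=> [[hr _] _].
set U := spectralmx rho.
set us := fun k : 'I_n.+1 => row k U.
set c := complex.Re (\tr (rho *m logm rho)).
have Hq : forall x, hpos x -> qrel_entropy rho x =
    c - \sum_k eigval rho k * qf (logm x) (us k).
  move=> x hx; rewrite /qrel_entropy mulmxBr linearB /= ReD ReN.
  congr (_ - _); rewrite {1}(herm_DM hr) Re_tr_DM //.
have T : forall X, complex.Re (\tr X) = \sum_k qf X (us k).
  move=> X; rewrite -[Y in \tr Y]mul1mx -rC1 -(DM_const rho 1) Re_tr_DM.
  by apply: eq_bigr => k _; rewrite mul1r.
have Hd : forall x, hpos x -> neglogdet x = - \sum_k qf (logm x) (us k).
  by move=> x hx; rewrite /neglogdet lndet // T.
split.
- apply: (conv_of _ (fun k => lambda_max rho - eigval rho k) (- c) us).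
    move=> k; rewrite subr_ge0 /lambda_max.
    exact: le_bigmax_seq (mem_index_enum _).
  by move=> x hx; rewrite Hq // Hd // L7.
- apply: (conv_of _ (fun k => eigval rho k - lambda_min rho) c us).
    move=> k; rewrite subr_ge0 /lambda_min.
    exact: ge_bigmin_seq (mem_index_enum _).
  by move=> x hx; rewrite Hq // Hd // L8.
Qed.
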